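(* For every finite sequence of primes $p_1,\dots,p_h$ there is a finite solvable algebra $\mathbf A$ with a Malcev term such that $\mathsf{nuDet}_{p_1}\circ\cdots\circ\mathsf{nuDet}_{p_h}\subseteq\mathrm{nuP}_{\mathbf A}$.
   Context: A finite algebra has finite universe and finitely many basic operations. An $n$-ary circuit over $\mathbf A$ is a DAG with one output node, sources labelled by variables or constants from $A$, gates labelled by basic operations; size is nodes plus edges. A NuDFA over $\mathbf A$ is $(\{t_n\}_{n\ge1},\iota,S)$ with $t_n$ an $n$-ary circuit, $\iota:\{0,1\}\to A$, $S\subseteq A$, accepting $b\in\{0,1\}^n$ iff $t_n(\iota(b_1),\dots,\iota(b_n))\in S$; polynomial size means size of $t_n$ polynomial in $n$; $\mathrm{nuP}_{\mathbf A}$ is the class of languages over $\{0,1\}$ accepted by polynomial-size NuDFAs over $\mathbf A$. A Malcev term is a ternary term $d$ with $d(x,y,y)=d(y,y,x)=x$; solvability is in the sense of commutator theory. An ABP over $\mathrm{GF}(p)$ is a directed acyclic multigraph with one source and one sink, edges labelled by variables or constants of $\mathrm{GF}(p)$; it computes the sum over source–sink paths of the products of labels; size is vertices plus edges. A $\mathrm{BABP}_p$ gate is labelled by an ABP over $\mathrm{GF}(p)$ and $T\subseteq\mathrm{GF}(p)$ and outputs 1 on Boolean inputs iff the polynomial value lies in $T$; its size is the ABP's size. $\mathsf{nuDet}_{p_1}\circ\cdots\circ\mathsf{nuDet}_{p_h}$ is the class of languages $L$ such that for each $n$, $L\cap\{0,1\}^n$ is recognized by a layered circuit whose top layer is a single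 $\mathrm{BABP}_{p_1}$ gate, whose layer $i$ consists of $\mathrm{BABP}_{p_i}$ gates fed by layer $i+1$, and whose bottom layer of $\mathrm{BABP}_{p_h}$ gates reads the input bits, of total size (edges plus gate sizes) polynomial in $n$. *)

(* Defs.v *)
From HB Require Import structures.
From mathcomp Require Import all_boot all_order all_algebra.
Set Implicit Arguments. Unset Strict Implicit. Unset Printing Implicit Defensive.
Import GRing.Theory.

Record finAlgebra := FinAlgebra {
  carrier : finType;
  sym : finType;
  arity : sym -> nat;
  op : forall s : sym, (arity s).-tuple carrier -> carrier }.

Inductive term (A : finAlgebra) (V : Type) : Type :=
  | Var of V
  | App (s : sym A) of ('I_(arity s) -> term A V).

Fixpoint teval (A : finAlgebra) (V : Type) (env : V -> carrier A)
  (t : term A V) : carrier A :=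
  match t with
  | Var v => env v
  | App s f => op (mktuple (fun j => teval env (f j)))
  end.

Definition env3 (A : finAlgebra) (x y z : carrier A) : 'I_3 -> carrier A :=
  fun i => nth x [:: x; y; z] i.

Definition has_malcev (A : finAlgebra) : Prop :=
  exists d : term A 'I_3, forall x y : carrier A,
    teval (env3 x y y) d = x /\ teval (env3 y y x) d = x.

Definition is_congruence (A : finAlgebra) (r : carrier A -> carrier A -> Prop) :=
  [/\ (forall x, r x x), (forall x y, r x y -> r y x),
      (forall x y z, r x y -> r y z -> r x z) &
      (forall s (x y : (arity s).-tuple (carrier A)),
          (forall j, r (tnth x j) (tnth y j)) -> r (op x) (op y))].

Definition envs (T : Type) m k (a : 'I_m -> T) (c : 'I_k -> T) : 'I_m + 'I_k -> T :=
  fun v => match v with inl i => a i | inr j => c j end.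

Definition termcond (A : finAlgebra) (alpha beta delta : carrier A -> carrier A -> Prop) :=
  forall m k (t : term A ('I_m + 'I_k)) (a b : 'I_m -> carrier A)
         (c d : 'I_k -> carrier A),
    (forall i, alpha (a i) (b i)) -> (forall j, beta (c j) (d j)) ->
    delta (teval (envs a c) t) (teval (envs a d) t) ->
    delta (teval (envs b c) t) (teval (envs b d) t).

Definition commutator (A : finAlgebra) (alpha beta : carrier A -> carrier A -> Prop)
  (x y : carrier A) : Prop :=
  forall delta, is_congruence delta -> termcond alpha beta delta -> delta x y.

Fixpoint derived (A : finAlgebra) (k : nat) : carrier A -> carrier A -> Prop :=
  match k with
  | 0 => fun _ _ => True
  | k'.+1 => commutator (@derived A k') (@derived A k')
  end.

Definition solvable_alg (A : finAlgebra) : Prop :=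
  exists k, forall x y, @derived A k x y -> x = y.

(* Circuits over A: list of nodes in topological order, output = last. *)
Inductive cnode (A : finAlgebra) : Type :=
  | CIn of nat                         (* source labelled by variable x_i (0-based) *)
  | CConst of carrier A
  | CGate (s : sym A) of seq nat.      (* gate labelled by s, children (earlier nodes) *)

Definition cnode_ok (A : finAlgebra) (n k : nat) (nd : cnode A) : bool :=
  match nd with
  | CIn i => i < n
  | CConst _ => true
  | CGate s ch => (size ch == arity s) && all (fun c => c < k) ch
  end.

Definition circuit_wf (A : finAlgebra) (n : nat) (c : seq (cnode A)) : Prop :=
  0 < size c /\ forall k, k < size c -> cnode_ok n k (nth (CIn A 0) c k).

Definition cnode_edges (A : finAlgebra) (nd : cnode A) : nat :=
  match nd with CGate _ ch => size ch | _ => 0 end.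

Definition circuit_size (A : finAlgebra) (c : seq (cnode A)) : nat :=
  size c + \sum_(nd <- c) cnode_edges nd.

Definition cnode_val (A : finAlgebra) (d0 : carrier A) (x : seq (carrier A))
  (vals : seq (carrier A)) (nd : cnode A) : carrier A :=
  match nd with
  | CIn i => nth d0 x i
  | CConst a => a
  | CGate s ch => op (mktuple (fun j : 'I_(arity s) => nth d0 vals (nth 0 ch j)))
  end.

Definition circuit_eval (A : finAlgebra) (d0 : carrier A) (c : seq (cnode A))
  (x : seq (carrier A)) : carrier A :=
  last d0 (foldl (fun vals nd => rcons vals (cnode_val d0 x vals nd)) [::] c).

(* nuP_A: languages accepted by polynomial-size NuDFAs over A
   (constraint on all nonempty words). *)
Definition in_nuP (A : finAlgebra) (L : seq bool -> bool) : Prop :=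
  exists (t : nat -> seq (cnode A)) (iota : bool -> carrier A)
         (S : {set carrier A}) (e : nat),
    (forall n, 0 < n -> circuit_wf n (t n) /\ circuit_size (t n) <= e * n ^ e + e) /\
    (forall b : seq bool, 0 < size b ->
       L b = (circuit_eval (iota false) (t (size b)) (map iota b) \in S)).

Inductive label : Type :=
  | LVar of nat      (* the i-th input of the gate (0-based) *)
  | LConst of nat.   (* the constant c mod p of GF(p) *)

(* A BABP gate: ABP with vertices 0..nv-1 (source 0, sink nv-1), edges
   (u, v, label) with u < v < nv; accepting set T given by residues;
   wires: the gates of the next layer (or input bits) it reads. *)
Record babp := BABP {
  g_nv : nat;
  g_edges : seq (nat * nat * label);
  g_acc : seq nat;
  g_wires : seq nat }.

Definition label_ok (nvars : nat) (l : label) : bool :=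
  match l with LVar i => i < nvars | LConst _ => true end.

Definition babp_wf (g : babp) (below : nat) : bool :=
  [&& 0 < g_nv g,
      all (fun e : nat * nat * label =>
             [&& e.1.1 < e.1.2, e.1.2 < g_nv g & label_ok (size (g_wires g)) e.2])
          (g_edges g)
    & all (fun w => w < below) (g_wires g)].

Definition babp_size (g : babp) : nat := g_nv g + size (g_edges g).

Fixpoint abp_walk (sink u : nat) (es : seq (nat * nat * label)) : bool :=
  match es with
  | [::] => u == sink
  | e :: es' => (e.1.1 == u) && abp_walk sink e.1.2 es'
  end.

Definition label_val (p : nat) (xs : seq bool) (l : label) : 'F_p :=
  match l with
  | LVar i => ((nth false xs i)%:R)%R
  | LConst c => (c%:R)%R
  end.

(* Sum over source--sink paths (sequences of distinct-index edges) of
   the products of labels; every path has fewer than nv edges. *)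
Definition abp_value (p : nat) (g : babp) (xs : seq bool) : 'F_p :=
  let E := g_edges g in
  let e0 := (0, 0, LConst 0) in
  (\sum_(k < g_nv g)
    \sum_(t : k.-tuple 'I_(size E) |
            abp_walk (g_nv g).-1 0 [seq nth e0 E (val i) | i <- t])
       \prod_(i <- t) label_val p xs (nth e0 E (val i)).2)%R.

Definition babp_out (p : nat) (g : babp) (prev : seq bool) : bool :=
  let xs := [seq nth false prev w | w <- g_wires g] in
  abp_value p g xs \in [seq ((c%:R)%R : 'F_p) | c <- g_acc g].

(* Layered circuit: layers = [L_1; ...; L_h], L_1 top (single gate),
   L_h bottom (reads the input bits). *)
Definition layered_wf (ps : seq nat) (n : nat) (layers : seq (seq babp)) : Prop :=
  size layers = size ps /\ size (head [::] layers) = 1 /\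
  forall i, i < size layers ->
    let below := if i.+1 < size layers then size (nth [::] layers i.+1) else n in
    all (fun g => babp_wf g below) (nth [::] layers i).

Definition layered_size (layers : seq (seq babp)) : nat :=
  \sum_(L <- layers) \sum_(g <- L) (babp_size g + size (g_wires g)).

Definition layered_eval (ps : seq nat) (layers : seq (seq babp)) (b : seq bool) : bool :=
  nth false
    (foldr (fun pL prev => [seq babp_out pL.1 g prev | g <- pL.2]) b (zip ps layers))
    0.

Definition in_nuDet (ps : seq nat) (L : seq bool -> bool) : Prop :=
  exists (C : nat -> seq (seq babp)) (e : nat),
    forall n, layered_wf ps n (C n) /\ layered_size (C n) <= e * n ^ e + e /\
      forall b : seq bool, size b = n -> L b = layered_eval ps (C n) b.

(* Main.v *)
Require Import Defs.
From mathcomp Require Import all_boot all_order all_algebra ring zify.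
Set Implicit Arguments. Unset Strict Implicit. Unset Printing Implicit Defensive.
Import GRing.Theory.
Open Scope ring_scope.

Lemma sum_tuple_cons (R : nzRingType) (I : finType) k (P : pred (k.+1.-tuple I))
   (F : k.+1.-tuple I -> R) :
  \sum_(t : k.+1.-tuple I | P t) F t =
  \sum_(i : I) \sum_(t : k.-tuple I | P [tuple of i :: t]) F [tuple of i :: t].
Proof.
rewrite [RHS](pair_big_dep xpredT (fun (i : I) (t : k.-tuple I) => P [tuple of i :: t]) (fun (i : I) (t : k.-tuple I) => F [tuple of i :: t])) /=.
pose h (p : I * k.-tuple I) : k.+1.-tuple I := [tuple of p.1 :: p.2].
pose g (t : k.+1.-tuple I) : I * k.-tuple I := (thead t, [tuple of behead t]).
rewrite (reindex h) /=; last first.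
  exists g => [[i t] _|t _]; first by congr pair; apply/val_inj.
  by rewrite /h /g; apply/val_inj => /=; case: t => -[|a s] //=.
by apply: eq_bigl => -[i t].
Qed.

Lemma sum_tuple0 (R : nzRingType) (I : finType) (P : pred (0.-tuple I))
   (F : 0.-tuple I -> R) :
  \sum_(t : 0.-tuple I | P t) F t = if P [tuple] then F [tuple] else 0.
Proof.
rewrite big_mkcond (big_pred1 [tuple]) // => t; rewrite [t]tuple0 /=; apply/esym/eqP; exact/val_inj.
Qed.

Definition e0 : nat * nat * label := (0%N, 0%N, LConst 0).
Definition lvR (R : nzRingType) (xs : seq bool) (l : label) : R :=
  match l with LVar i => (nth false xs i)%:R | LConst c => c%:R end.

Definition psum (R : nzRingType) (E : seq (nat * nat * label)) xs s n u : R :=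
  \sum_(k < n) \sum_(t : k.-tuple 'I_(size E) |
      abp_walk s u [seq nth e0 E (val i) | i <- t])
    \prod_(i <- t) lvR R xs (nth e0 E (val i)).2.

Fixpoint Wf (R : nzRingType) (E : seq (nat * nat * label)) xs s n u : R :=
  match n with
  | 0 => 0
  | n'.+1 => (u == s)%:R + \sum_(i < size E | (nth e0 E i).1.1 == u)
                lvR R xs (nth e0 E i).2 * Wf R E xs s n' (nth e0 E i).1.2
  end.

Lemma psum_Wf R E xs s n u : psum R E xs s n u = Wf R E xs s n u.
Proof.
elim: n u => [|n IH] u; first by rewrite /psum big_ord0.
rewrite /psum big_ord_recl /=; congr (_ + _).
  by rewrite sum_tuple0 /= big_nil; case: (u == s).
under eq_bigr => k _ do rewrite sum_tuple_cons /=.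
rewrite exchange_big /= [RHS]big_mkcond /=; apply: eq_bigr => i _.
under eq_bigr => k _ do under eq_bigl => t do rewrite /= .
case: ((nth e0 E i).1.1 =P u) => [_|ne].
  rewrite -IH /psum mulr_sumr; apply: eq_bigr => k _.
  rewrite mulr_sumr; apply: eq_bigr => t _.
  by rewrite big_cons.
by rewrite big1 // => k _; rewrite big1 // => t /andP[/eqP].
Qed.

Lemma par3 (R : comNzRingType) (a0 a1 a2 b0 b1 b2 c0 c1 c2 d0 d1 d2 : R) :
  a0 - b0 - c0 + d0 = 0 -> a1 - b1 - c1 + d1 = 0 -> a2 - b2 - c2 + d2 = 0 ->
  (a0 - a1 + a2) - (b0 - b1 + b2) - (c0 - c1 + c2) + (d0 - d1 + d2) = 0.
Proof.
move=> h0 h1 h2.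
have -> : (a0 - a1 + a2) - (b0 - b1 + b2) - (c0 - c1 + c2) + (d0 - d1 + d2) =
  (a0 - b0 - c0 + d0) - (a1 - b1 - c1 + d1) + (a2 - b2 - c2 + d2) by ring.
by rewrite h0 h1 h2 subrr add0r.
Qed.

Section Alg.
Variable ps : seq nat.
Definition Mof := (\prod_(p <- ps) p)%N.
Local Notation M := Mof.
Local Notation K := (size ps).+2.
Definition Car : finType := {ffun 'I_K -> 'Z_M}.
Definition Sym : finType := option ('Z_M + {set 'Z_M}).
Definition ar (s : Sym) : nat :=
  match s with None => 3%N | Some (inl _) => 1%N | Some (inr _) => 2%N end.
Definition mulbit (T : {set 'Z_M}) (x y : Car) : Car :=
  [ffun i : 'I_K => if (i < (size ps).+1)%N then x i * ((y (inord i.+1)) \in T)%:R else x i].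
Definition opf (s : Sym) : (ar s).-tuple Car -> Car :=
  match s as s0 return (ar s0).-tuple Car -> Car with
  | None => fun t => [ffun i => tnth t ord0 i - tnth t (inord 1) i + tnth t (inord 2) i]
  | Some (inl c) => fun t => [ffun i => c * tnth t ord0 i]
  | Some (inr T) => fun t => mulbit T (tnth t ord0) (tnth t (inord 1))
  end.
Definition Alg : finAlgebra := @FinAlgebra Car Sym ar opf.

Definition agree (j : nat) (x y : Car) := forall i : 'I_K, (j <= i)%N -> x i = y i.
Definition par (i : 'I_K) (x y z w : Car) := x i - y i - z i + w i = 0.

Lemma op_mono (s : Sym) j (X Y : (ar s).-tuple Car) :
  (forall k, agree j (tnth X k) (tnth Y k)) -> agree j (opf X) (opf Y).
Proof.
case: s X Y => [[c|T]|] X Y H i ji /=; rewrite ?ffunE.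
- by rewrite (H ord0 i ji).
- rewrite (H ord0 i ji); case: ifP => // lt.
  rewrite (H (inord 1) (inord i.+1)) // inordK //; exact: leqW.
- by rewrite (H ord0 i ji) (H (inord 1) i ji) (H (inord 2) i ji).
Qed.

Lemma op_aff (s : Sym) (i : 'I_K) (X Y Z W : (ar s).-tuple Car) :
  (forall k, [/\ agree i.+1 (tnth X k) (tnth Y k), agree i.+1 (tnth X k) (tnth Z k)
      & agree i.+1 (tnth X k) (tnth W k)]) ->
  (forall k, par i (tnth X k) (tnth Y k) (tnth Z k) (tnth W k)) ->
  par i (opf X) (opf Y) (opf Z) (opf W).
Proof.
rewrite /par; case: s X Y Z W => [[c|T]|] X Y Z W Ha Hp /=; rewrite ?ffunE.
- by rewrite -!mulrBr -mulrDr (Hp ord0) mulr0.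
- case: ifP => // lt.
  have [h1 h2 h3] := Ha (inord 1).
  have e : (i.+1 <= (inord i.+1 : 'I_K))%N by rewrite inordK.
  rewrite -(h1 _ e) -(h2 _ e) -(h3 _ e).
  by rewrite -!mulrBl -mulrDl (Hp ord0) mul0r.
- have := Hp ord0; have := Hp (inord 1); have := Hp (inord 2).
  by move=> h2 h1 h0; apply: par3.
Qed.

Lemma teval_mono V (t : term Alg V) j (e1 e2 : V -> carrier Alg) :
  (forall v, agree j (e1 v) (e2 v)) -> agree j (teval e1 t) (teval e2 t).
Proof.
move=> He; elim: t => [v|s f IH] /=; first exact: He.
apply: op_mono => k; rewrite !tnth_mktuple; exact: IH.
Qed.

Lemma teval_aff V (t : term Alg V) (i : 'I_K) (e1 e2 e3 e4 : V -> carrier Alg) :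
  (forall v, [/\ agree i.+1 (e1 v) (e2 v), agree i.+1 (e1 v) (e3 v)
      & agree i.+1 (e1 v) (e4 v)]) ->
  (forall v, par i (e1 v) (e2 v) (e3 v) (e4 v)) ->
  par i (teval e1 t) (teval e2 t) (teval e3 t) (teval e4 t).
Proof.
move=> Ha Hp; elim: t => [v|s f IH] /=; first exact: Hp.
have Hm : forall (ea eb : V -> carrier Alg), (forall v, agree i.+1 (ea v) (eb v)) ->
   forall k, agree i.+1 (teval ea (f k)) (teval eb (f k)).
  by move=> ea eb H k; apply: teval_mono.
apply: op_aff => k; rewrite !tnth_mktuple //.
by split; apply: Hm => v; case: (Ha v).
Qed.

Lemma agree_cong j : @is_congruence Alg (agree j).
Proof.
split.
- by [].
- by move=> x y H i ji; rewrite H.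
- by move=> x y z H1 H2 i ji; rewrite H1 // H2.
- by move=> s x y H; apply: op_mono.
Qed.

Lemma agree_le j j' x y : (j <= j')%N -> agree j x y -> agree j' x y.
Proof. by move=> le H i ji; apply: H; apply: leq_trans ji. Qed.

Lemma agree_tc j : @termcond Alg (agree j.+1) (agree j.+1) (agree j).
Proof.
move=> m k t a b c d Hab Hcd H i ji.
have [ij|ij] := ltnP j i.
  apply: (@teval_mono _ t j.+1) => // -[v|v] /=; [by [] | exact: Hcd].
have ei : nat_of_ord i = j by apply/eqP; rewrite eqn_leq ij ji.
have Hp : par i (teval (envs a c) t) (teval (envs a d) t)
                (teval (envs b c) t) (teval (envs b d) t).
  apply: teval_aff => -[v|v] /=; rewrite ?ei.
  - by split => //; exact: Hab.
  - by split => //; exact: Hcd.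
  - by rewrite /par subrr sub0r addrC subrr.
  - by rewrite /par [_ - _ - _]addrAC subrr sub0r addrC subrr.
move: Hp; rewrite /par (H i ji) subrr sub0r => /eqP; rewrite addrC subr_eq0.
by move/eqP.
Qed.

Lemma termcond_anti (al al' be be' de : Car -> Car -> Prop) :
  (forall x y, al x y -> al' x y) -> (forall x y, be x y -> be' x y) ->
  @termcond Alg al' be' de -> @termcond Alg al be de.
Proof.
move=> Ha Hb H m k t a b c d Hab Hcd; apply: H => i; [apply: Ha | apply: Hb]; by [].
Qed.

Lemma derived_agree k x y : @derived Alg k x y -> agree (K - k) x y.
Proof.
elim: k x y => [|k IH] x y /=; first by move=> _ i; rewrite leqNgt ltn_ord.
move=> H; apply: (H (agree (K - k.+1))); first exact: agree_cong.
apply: (termcond_anti (al' := agree (K - k.+1).+1) (be' := agree (K - k.+1).+1)).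
- by move=> u v /IH; apply: agree_le; rewrite subnS; apply: leqSpred.
- by move=> u v /IH; apply: agree_le; rewrite subnS; apply: leqSpred.
exact: agree_tc.
Qed.

Lemma Alg_solvable : solvable_alg Alg.
Proof.
exists K => x y /derived_agree; rewrite subnn => H.
by apply/ffunP => i; apply: H.
Qed.

Lemma Alg_malcev : has_malcev Alg.
Proof.
exists (@App Alg _ (None : Sym) (fun j => Var _ j)) => x y /=.
split; apply/ffunP => i; rewrite ffunE !tnth_mktuple /env3 /= !inordK //.
- by rewrite subrK.
- by rewrite subrr add0r.
Qed.
End Alg.
Lemma Wf_S (R : nzRingType) E xs s n u : Wf R E xs s n.+1 u =
  (u == s)%:R + \sum_(i < size E | (nth e0 E i).1.1 == u)
                lvR R xs (nth e0 E i).2 * Wf R E xs s n (nth e0 E i).1.2.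
Proof. by []. Qed.

Lemma Wf_stable (R : nzRingType) E xs s :
  (forall i, (i < size E)%N -> ((nth e0 E i).1.1 < (nth e0 E i).1.2)%N /\ ((nth e0 E i).1.2 <= s)%N) ->
  forall n m u, (s - u < n)%N -> (s - u < m)%N -> Wf R E xs s n u = Wf R E xs s m u.
Proof.
move=> HE; elim=> [|n IH] [|m] u //= hn hm; congr (_ + _); apply: eq_bigr => i /eqP hi.
have [h1 h2] := HE i (ltn_ord i); rewrite hi in h1.
by congr (_ * _); apply: IH; lia.
Qed.

Section Phi.
Variables (M p : nat).
Hypotheses (pp : prime p) (pM : (p %| M)%N) (M1 : (1 < M)%N).
Definition phi (z : 'Z_M) : 'F_p := (nat_of_ord z)%:R.
Lemma phi_nat k : phi (k%:R) = k%:R.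
Proof.
rewrite /phi val_Zp_nat // {2}(divn_eq k M) natrD natrM.
by move: pM => /dvdnP[q ->]; rewrite natrM pchar_Fp_0 // !mulr0 add0r.
Qed.
Lemma phiE (z : 'Z_M) : z = (nat_of_ord z)%:R.
Proof. apply: val_inj => /=; rewrite val_Zp_nat // modn_small //; have := ltn_ord z; move: (nat_of_ord z) => k; by rewrite (Zp_cast M1). Qed.
Lemma phiD a b : phi (a + b) = phi a + phi b.
Proof. by rewrite (phiE a) (phiE b) -natrD !phi_nat natrD. Qed.
Lemma phiM a b : phi (a * b) = phi a * phi b.
Proof. by rewrite (phiE a) (phiE b) -natrM !phi_nat natrM. Qed.
Lemma phi0 : phi 0 = 0.
Proof. by have := phi_nat 0; rewrite !mulr0n. Qed.
Lemma phi_Wf E xs s n u : phi (Wf _ E xs s n u) = Wf _ E xs s n u.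
Proof.
elim: n u => [|n IH] u /=; first exact: phi0.
rewrite phiD phi_nat; congr (_ + _).
rewrite (big_morph phi phiD phi0); apply: eq_bigr => i _.
rewrite phiM IH; congr (_ * _); case: (nth e0 E i).2 => k /=; exact: phi_nat.
Qed.
End Phi.

Section Circ.
Variable ps : seq nat.
Local Notation M := (Mof ps).
Local Notation K := (size ps).+2.
Local Notation A := (Alg ps).
Local Notation Car := (Car ps).
Local Notation node := (cnode A).
Definition Z0 : carrier A := [ffun _ => 0].
Definition inj (b : bool) : carrier A := [ffun _ => (b : nat)%:R].
Definition O1 : carrier A := [ffun _ => 1].
Variable x : seq (carrier A).
Definition gD : sym A := None.
Definition gS (z : 'Z_M) : sym A := Some (inl z).
Definition gM (T : {set 'Z_M}) : sym A := Some (inr T).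
Definition vals (c : seq node) :=
  foldl (fun (vs : seq (carrier A)) (nd : node) => rcons vs (cnode_val Z0 x vs nd)) [::] c.
Definition ev c k := nth Z0 (vals c) k.

Lemma foldl_pre (c : seq node) v :
  exists r, foldl (fun (vs : seq (carrier A)) (nd : node) => rcons vs (cnode_val Z0 x vs nd)) v c = v ++ r.
Proof.
elim: c v => [|nd c IH] v /=; first by exists [::]; rewrite cats0.
have [r ->] := IH (rcons v (cnode_val Z0 x v nd)).
by exists (cnode_val Z0 x v nd :: r); rewrite -cats1 -catA.
Qed.

Lemma size_vals c : size (vals c) = size c.
Proof.
rewrite /vals; elim/last_ind: c => [|c nd IH] //.
by rewrite -cats1 foldl_cat /= size_rcons IH size_cat addn1.
Qed.

Lemma vals_rcons c nd : vals (rcons c nd) = rcons (vals c) (cnode_val Z0 x (vals c) nd).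
Proof. by rewrite /vals -cats1 foldl_cat. Qed.

Lemma ev_cat c t k : (k < size c)%N -> ev (c ++ t) k = ev c k.
Proof.
move=> lt; rewrite /ev {1}/vals foldl_cat -/(vals c).
have [r ->] := foldl_pre t (vals c).
by rewrite nth_cat size_vals lt.
Qed.

Lemma ev_last c nd : ev (rcons c nd) (size c) = cnode_val Z0 x (vals c) nd.
Proof. by rewrite /ev vals_rcons nth_rcons size_vals ltnn eqxx. Qed.

Lemma ev_scale (c : seq node) z a :
  ev (rcons c (CGate (gS z) [:: a])) (size c) = [ffun i => z * ev c a i].
Proof. by rewrite ev_last /= /opf; apply/ffunP => i; rewrite !ffunE tnth_mktuple. Qed.

Lemma ev_mulbit (c : seq node) T a b :
  ev (rcons c (CGate (gM T) [:: a; b])) (size c) = mulbit T (ev c a) (ev c b).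
Proof. by rewrite ev_last /= /opf !tnth_mktuple /= inordK. Qed.

Lemma ev_d (c : seq node) a b e :
  ev (rcons c (CGate gD [:: a; b; e])) (size c) =
  [ffun i => ev c a i - ev c b i + ev c e i].
Proof.
by rewrite ev_last /= /opf; apply/ffunP => i; rewrite !ffunE !tnth_mktuple /= !inordK.
Qed.

Lemma mulbitE T (y z : Car) l : (l < (size ps).+1)%N ->
  mulbit T y z (inord l) = y (inord l) * ((z (inord l.+1)) \in T)%:R.
Proof. move=> lt; rewrite /mulbit ffunE inordK ?lt //; exact: leqW. Qed.

Definition okc n (c : seq node) :=
  forall k, (k < size c)%N -> cnode_ok n k (nth (CIn A 0) c k).

Lemma okc_rcons n c nd : okc n c -> cnode_ok n (size c) nd -> okc n (rcons c nd).
Proof.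
move=> H Hn k; rewrite size_rcons ltnS leq_eqVlt nth_rcons => /orP[/eqP->|lt].
  by rewrite ltnn eqxx.
by rewrite lt; apply: H.
Qed.

Section Edges.
Variables (E : seq (nat * nat * label)) (u : nat) (vm wsrc : nat -> nat)
  (wT : nat -> {set 'Z_M}) (zi : nat).

Definition tnode (e : nat * nat * label) : node :=
  match e.2 with
  | LConst q => CGate (gS q%:R) [:: vm e.1.2]
  | LVar w => CGate (gM (wT w)) [:: vm e.1.2; wsrc w]
  end.

Fixpoint cedges (c : seq node) (acc : nat) (es : seq nat) : seq node * nat :=
  if es is i :: es' then
    if (nth e0 E i).1.1 == u then
      let c1 := rcons c (tnode (nth e0 E i)) in
      cedges (rcons c1 (CGate gD [:: acc; zi; size c])) (size c1) es'
    else cedges c acc es'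
  else (c, acc).

Variables (n l : nat) (xs : seq bool) (Wv : nat -> 'Z_M).
Hypothesis ll : (l < (size ps).+1)%N.

Definition edge_ok (c : seq node) (i : nat) :=
  let e := nth e0 E i in
  (vm e.1.2 < size c)%N /\ ev c (vm e.1.2) (inord l) = Wv e.1.2 /\
  match e.2 with
  | LVar w => (wsrc w < size c)%N /\ ((ev c (wsrc w) (inord l.+1)) \in wT w) = nth false xs w
  | LConst _ => True
  end.

Lemma edge_ok_cat c t i : edge_ok c i -> edge_ok (c ++ t) i.
Proof.
rewrite /edge_ok size_cat => -[h1 [h2 h3]]; split; first exact: ltn_addr.
rewrite ev_cat // h2; split=> //; case: (nth e0 E i).2 h3 => // w [h4 h5].
by rewrite ev_cat // ltn_addr.
Qed.

Lemma cedges_spec es c acc :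
  okc n c -> (zi < size c)%N -> ev c zi (inord l) = 0 -> (acc < size c)%N ->
  (forall i, i \in es -> (nth e0 E i).1.1 == u -> edge_ok c i) ->
  let r := cedges c acc es in
  [/\ exists t, r.1 = c ++ t, okc n r.1, (r.2 < size r.1)%N,
      ev r.1 r.2 (inord l) = ev c acc (inord l) +
        \sum_(i <- es | (nth e0 E i).1.1 == u) lvR _ xs (nth e0 E i).2 * Wv (nth e0 E i).1.2
    & (size r.1 <= size c + 2 * size es)%N].
Proof.
elim: es c acc => [|i es IH] c acc okc0 zic zi0 accc Hok /=.
  by split; [exists [::]; rewrite cats0 | | | rewrite big_nil addr0 | rewrite addn0].
have Hok' : forall j, j \in es -> (nth e0 E j).1.1 == u -> edge_ok c j.
  by move=> j hj; apply: Hok; rewrite inE hj orbT.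
rewrite big_cons; case: ifP => hu; last first.
  have := IH c acc okc0 zic zi0 accc Hok'.
  case=> [ext ok1 lt1 ev1 sz1]; split => //; last by apply: leq_trans sz1 _; rewrite leq_add2l leq_mul2l ltnW.
have [h1 [h2 h3]] := Hok i (mem_head _ _) hu.
set c1 := rcons c _; set c2 := rcons c1 _.
have ext2 : c2 = c ++ [:: tnode (nth e0 E i); CGate gD [:: acc; zi; size c]].
  by rewrite /c2 /c1 -!cats1 -catA.
have sc1 : size c1 = (size c).+1 by rewrite size_rcons.
have sc2 : size c2 = (size c).+2 by rewrite size_rcons sc1.
have ok2 : okc n c2.
  apply: okc_rcons; first apply: okc_rcons => //.
    rewrite /tnode; case: (nth e0 E i).2 h3 => [w [h4 _]|q _] /=; rewrite ?andbT ?h1 ?h4 //.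
  by rewrite /= sc1 ltnS (ltnW accc) ltnS (ltnW zic) ltnSn.
have IHs := IH c2 (size c1) ok2.
have cl : forall k, (k < size c)%N -> ev c2 k = ev c k by move=> k hk; rewrite ext2 ev_cat.
case: IHs.
- by rewrite sc2 ltnS ltnW // ltnW.
- by rewrite cl.
- by rewrite sc1 sc2.
- move=> j hj hj'; rewrite ext2; apply: edge_ok_cat; exact: Hok' j hj hj'.
move=> [t ext] ok3 lt3 ev3 sz3; split => //.
- by exists ([:: tnode (nth e0 E i); CGate gD [:: acc; zi; size c]] ++ t); rewrite ext ext2 catA.
- rewrite ev3 addrA; congr (_ + _).
  have e1 : forall k, (k < size c)%N -> ev c1 k = ev c k.
    by move=> k hk; rewrite /c1 -cats1 ev_cat.
  rewrite /c2 ev_d ffunE (e1 acc) // (e1 zi) // zi0 subr0; congr (_ + _).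
  rewrite /c1 /tnode; move: h3; case: (nth e0 E i).2 => [w [h4 h5]|q _].
    by rewrite ev_mulbit mulbitE // h2 h5 mulrC.
  by rewrite ev_scale ffunE h2.
- by apply: leq_trans sz3 _; rewrite sc2 mulnS addnA addn2.
Qed.
End Edges.

Section Verts.
Variables (E : seq (nat * nat * label)) (s : nat) (wsrc : nat -> nat)
  (wT : nat -> {set 'Z_M}) (zi oi : nat).

Fixpoint cverts (k : nat) (c : seq node) (vm : nat -> nat) : seq node * (nat -> nat) :=
  if k is k'.+1 then
    let r := cedges E k' vm wsrc wT zi c (if k' == s then oi else zi) (iota 0 (size E)) in
    cverts k' r.1 (fun v => if v == k' then r.2 else vm v)
  else (c, vm).

Variables (n l nw : nat) (xs : seq bool) (c0 : seq node).
Hypothesis ll : (l < (size ps).+1)%N.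
Hypothesis HE : forall i, (i < size E)%N ->
  [/\ ((nth e0 E i).1.1 < (nth e0 E i).1.2)%N, ((nth e0 E i).1.2 <= s)%N &
      match (nth e0 E i).2 with LVar w => (w < nw)%N | LConst _ => True end].
Hypothesis Hw : forall w, (w < nw)%N ->
  (wsrc w < size c0)%N /\ ((ev c0 (wsrc w) (inord l.+1)) \in wT w) = nth false xs w.
Hypothesis Hz : (zi < size c0)%N /\ ev c0 zi (inord l) = 0.
Hypothesis Ho : (oi < size c0)%N /\ ev c0 oi (inord l) = 1.

Local Notation V := (Wf _ E xs s s.+1 : nat -> 'Z_M).

Lemma Vrec u : (u <= s)%N ->
  V u = (u == s)%:R + \sum_(i <- iota 0 (size E) | (nth e0 E i).1.1 == u)
     lvR _ xs (nth e0 E i).2 * V (nth e0 E i).1.2.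
Proof.
move=> us; rewrite Wf_S; congr (_ + _).
have -> : iota 0 (size E) = index_iota 0 (size E) by rewrite /index_iota subn0.
rewrite big_mkord.
apply: eq_bigr => i /eqP hi; congr (_ * _).
have [h1 h2 _] := HE (ltn_ord i).
apply: Wf_stable; [|lia|lia].
by move=> j hj; have [] := HE hj.
Qed.

Lemma cverts_spec k c vm : (k <= s.+1)%N -> (exists t, c = c0 ++ t) -> okc n c ->
  (forall v, (k <= v <= s)%N -> (vm v < size c)%N /\ ev c (vm v) (inord l) = V v) ->
  let r := cverts k c vm in
  [/\ exists t, r.1 = c ++ t, okc n r.1,
      (forall v, (v <= s)%N -> (r.2 v < size r.1)%N /\ ev r.1 (r.2 v) (inord l) = V v)
    & (size r.1 <= size c + k * (2 * size E))%N].
Proof.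
elim: k c vm => [|k IH] c vm ks [t0 ext0] okc0 Hinv /=.
  by split; [exists [::]; rewrite cats0 | | |rewrite addn0].
have sc0 : (size c0 <= size c)%N by rewrite ext0 size_cat leq_addr.
have c0c : forall j, (j < size c0)%N -> ev c j = ev c0 j by move=> j hj; rewrite ext0 ev_cat.
have := @cedges_spec E k vm wsrc wT zi n l xs V ll (iota 0 (size E)) c
   (if k == s then oi else zi) okc0.
case.
- by apply: leq_trans sc0; case: Hz.
- by rewrite c0c; case: Hz.
- by case: (k == s); [case: Ho|case: Hz] => h _; apply: leq_trans sc0.
- move=> i; rewrite mem_iota add0n => /andP[_ hi] /eqP hu.
  have [h1 h2 h3] := HE hi; rewrite hu in h1.
  have [h4 h5] := Hinv _ (introT andP (conj h1 h2)).
  split=> //; split=> //.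
  move: h3; case: (nth e0 E i).2 => // w hw.
  have [h6 h7] := Hw hw; split; first exact: leq_trans sc0.
  by rewrite c0c.
move=> [t1 ext1] ok1 lt1 ev1 sz1.
set r := cedges _ _ _ _ _ _ _ _ _ in ext1 ok1 lt1 ev1 sz1 *.
have := IH r.1 (fun v => if v == k then r.2 else vm v) (ltnW ks).
case.
- by exists (t0 ++ t1); rewrite ext1 ext0 catA.
- exact: ok1.
- move=> v /andP[kv vs]; case: eqP => [->|ne].
    split=> //; rewrite ev1 Vrec; last by rewrite -ltnS.
    congr (_ + _); case: (k =P s) => _.
      by case: Ho => h e; rewrite c0c // e.
    by case: Hz => h e; rewrite c0c // e.
  have kv' : (k < v)%N by rewrite ltn_neqAle eq_sym kv andbT; apply/eqP.
  have [h1 h2] := Hinv v (introT andP (conj kv' vs)).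
  by rewrite ext1 size_cat ev_cat // ltn_addr.
move=> [t2 ext2] ok2 Hv sz2; split => //.
- by exists (t1 ++ t2); rewrite ext2 ext1 catA.
- apply: leq_trans sz2 _; apply: leq_trans (leq_add sz1 (leqnn _)) _.
  by rewrite size_iota [in X in (_ <= X)%N]mulSn addnA.
Qed.
End Verts.

Definition Tof (p : nat) (g : babp) : {set 'Z_M} :=
  [set z : 'Z_M | @phi M p z \in [seq (c%:R : 'F_p) | c <- g_acc g]].

Definition cgate (g : babp) (src : seq nat) (Ts : seq {set 'Z_M}) (zi oi : nat)
   (c : seq node) : seq node * nat :=
  let ws := g_wires g in
  let r := cverts (g_edges g) (g_nv g).-1 (fun w => nth 0%N src (nth 0%N ws w))
      (fun w => nth set0 Ts (nth 0%N ws w)) zi oi (g_nv g) c (fun _ => zi) in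
  (r.1, r.2 0%N).

Definition LInv (c : seq node) (src : seq nat) (Ts : seq {set 'Z_M}) (lev : nat)
   (bits : seq bool) :=
  forall k, (k < size bits)%N -> (nth 0%N src k < size c)%N /\
     ((ev c (nth 0%N src k) (inord lev)) \in nth set0 Ts k) = nth false bits k.

Lemma LInv_cat c t src Ts lev bits : LInv c src Ts lev bits -> LInv (c ++ t) src Ts lev bits.
Proof.
move=> H k hk; have [h1 h2] := H k hk; rewrite size_cat ev_cat // h2.
by split=> //; apply: ltn_addr.
Qed.

Definition CInv (c : seq node) (zi oi : nat) :=
  [/\ (zi < size c)%N, (oi < size c)%N, forall i, ev c zi i = 0 & forall i, ev c oi i = 1].

Lemma CInv_cat c t zi oi : CInv c zi oi -> CInv (c ++ t) zi oi.
Proof.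
case=> h1 h2 h3 h4; split; rewrite ?size_cat ?ltn_addr //.
- by move=> i; rewrite ev_cat.
- by move=> i; rewrite ev_cat.
Qed.

Lemma cgate_spec (p n l : nat) g src Ts zi oi c prev :
  (l < (size ps).+1)%N -> prime p -> (p %| M)%N -> (1 < M)%N ->
  babp_wf g (size prev) -> LInv c src Ts l.+1 prev -> CInv c zi oi -> okc n c ->
  let r := cgate g src Ts zi oi c in
  [/\ exists t, r.1 = c ++ t, okc n r.1, (r.2 < size r.1)%N,
      ((ev r.1 r.2 (inord l)) \in Tof p g) = babp_out p g prev
    & (size r.1 <= size c + g_nv g * (2 * size (g_edges g)))%N].
Proof.
move=> ll pp pM M1 /and3P[nv0 Hed Hwi] HL [z1 o1 z2 o2] okc0.
move/(all_nthP e0): Hed => Hed; move/allP: Hwi => Hwi.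
set ws := g_wires g; set E := g_edges g; set s := (g_nv g).-1.
set xs := [seq nth false prev w | w <- ws].
have := @cverts_spec E s (fun w => nth 0%N src (nth 0%N ws w))
  (fun w => nth set0 Ts (nth 0%N ws w)) zi oi n l (size ws) xs c ll _ _ _ _ (g_nv g) c (fun _ => zi).
case.
- move=> i hi; have /and3P[h1 h2 h3] := Hed _ hi.
  split=> //; first by rewrite /s -ltnS prednK.
  by move: h3; case: (nth e0 E i).2.
- move=> w hw; have hk : (nth 0%N ws w < size prev)%N by apply: Hwi; apply: mem_nth.
  have [h1 h2] := HL _ hk; split=> //; by rewrite /xs (nth_map 0%N) // -h2.
- by split=> //; rewrite z2.
- by split=> //; rewrite o2.
- by rewrite /s prednK.
- by exists [::]; rewrite cats0.
- by [].
- move=> v /andP[h1 h2]; move: (leq_trans h1 h2) nv0; rewrite /s; lia.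
move=> ext ok1 Hv sz; split=> //.
- by case: (Hv 0%N (leq0n _)).
- have [_ ->] := Hv 0%N (leq0n _).
  rewrite /Tof inE phi_Wf // /s prednK // -psum_Wf.
  by [].
Qed.


Fixpoint clayer (L : seq babp) (src : seq nat) (Ts : seq {set 'Z_M}) (zi oi : nat)
   (c : seq node) : seq node * seq nat :=
  if L is g :: L' then
    let r := cgate g src Ts zi oi c in
    let r2 := clayer L' src Ts zi oi r.1 in (r2.1, r.2 :: r2.2)
  else (c, [::]).

Definition gcost (g : babp) := (g_nv g * (2 * size (g_edges g)))%N.

Lemma clayer_spec (p n l : nat) L src Ts zi oi c prev :
  (l < (size ps).+1)%N -> prime p -> (p %| M)%N -> (1 < M)%N ->
  all (fun g => babp_wf g (size prev)) L -> LInv c src Ts l.+1 prev -> CInv c zi oi ->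
  okc n c ->
  let r := clayer L src Ts zi oi c in
  [/\ exists t, r.1 = c ++ t, okc n r.1,
      LInv r.1 r.2 [seq Tof p g | g <- L] l [seq babp_out p g prev | g <- L]
    & (size r.1 <= size c + \sum_(g <- L) gcost g)%N].
Proof.
move=> ll pp pM M1; elim: L c => [|g L IH] c /=.
  move=> _ _ _ ok; split=> //; first by exists [::]; rewrite cats0.
  by rewrite big_nil addn0.
move=> /andP[wg wL] HL HC ok.
have [[t ext] ok1 lt1 ev1 sz1] := cgate_spec ll pp pM M1 wg HL HC ok.
set r := cgate g src Ts zi oi c in ext ok1 lt1 ev1 sz1 *.
have HL1 : LInv r.1 src Ts l.+1 prev by rewrite ext; apply: LInv_cat.
have HC1 : CInv r.1 zi oi by rewrite ext; apply: CInv_cat.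
have [[t2 ext2] ok2 HL2 sz2] := IH r.1 wL HL1 HC1 ok1.
split=> //.
- by exists (t ++ t2); rewrite ext2 ext catA.
- move=> [|k] /=; last by move=> hk; apply: HL2.
  by move=> _; rewrite ext2 size_cat ev_cat // ltn_addr.
- rewrite big_cons; apply: leq_trans sz2 _; rewrite addnA leq_add2r.
  exact: sz1.
Qed.

Definition evalF (b : seq bool) (pl : seq (nat * seq babp)) : seq bool :=
  foldr (fun pL prev => [seq babp_out pL.1 g prev | g <- pL.2]) b pl.

Fixpoint plwf (b : seq bool) (pl : seq (nat * seq babp)) : Prop :=
  if pl is pL :: pl' then
    [/\ prime pL.1, (pL.1 %| M)%N, all (fun g => babp_wf g (size (evalF b pl'))) pL.2
      & plwf b pl']
  else True.

Definition cstep (zi oi : nat) (pL : nat * seq babp)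
    (st : seq node * seq nat * seq {set 'Z_M}) :=
  let r := clayer pL.2 st.1.2 st.2 zi oi st.1.1 in
  (r.1, r.2, [seq Tof pL.1 g | g <- pL.2]).

Definition plcost (pl : seq (nat * seq babp)) :=
  (\sum_(pL <- pl) \sum_(g <- pL.2) gcost g)%N.

Lemma cfold_spec n zi oi (b : seq bool) pl c src Ts :
  (1 < M)%N -> (size pl <= size ps)%N -> plwf b pl ->
  LInv c src Ts (size ps).+1 b -> CInv c zi oi -> okc n c ->
  let r := foldr (cstep zi oi) (c, src, Ts) pl in
  [/\ exists t, r.1.1 = c ++ t, okc n r.1.1,
      LInv r.1.1 r.1.2 r.2 ((size ps).+1 - size pl) (evalF b pl)
    & (size r.1.1 <= size c + plcost pl)%N].
Proof.
move=> M1; elim: pl => [|pL pl IH] /=.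
  move=> _ _ HL _ ok; split=> //; first by exists [::]; rewrite cats0.
  by rewrite /plcost big_nil addn0.
move=> spl [pp pM wL wpl] HL HC ok.
have [[t ext] ok1 HL1 sz1] := IH (ltnW spl) wpl HL HC ok.
set r := foldr _ _ _ in ext ok1 HL1 sz1 *.
have ll : ((size ps).+1 - (size pl).+1 < (size ps).+1)%N by rewrite subSS ltnS leq_subr.
have HC1 : CInv r.1.1 zi oi by rewrite ext; apply: CInv_cat.
have HL1' : LInv r.1.1 r.1.2 r.2 ((size ps).+1 - (size pl).+1).+1 (evalF b pl).
  by rewrite subSS -subSn //; apply: ltnW.
have [[t2 ext2] ok2 HL2 sz2] := clayer_spec ll pp pM M1 wL HL1' HC1 ok1.
rewrite /cstep /=; split=> //.
- by exists (t ++ t2); rewrite ext2 ext catA.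
- rewrite /plcost big_cons; apply: leq_trans sz2 _.
  apply: leq_trans (leq_add sz1 (leqnn _)) _.
  by rewrite -addnA leq_add2l addnC.
Qed.


End Circ.

Lemma sum_sq (I : Type) (s : seq I) (f : I -> nat) :
  (\sum_(i <- s) f i ^ 2 <= (\sum_(i <- s) f i) ^ 2)%N.
Proof.
elim: s => [|a s IH]; first by rewrite !big_nil.
rewrite !big_cons sqrnD -addnA leq_add2l; apply: leq_trans IH _; exact: leq_addr.
Qed.

Section Final.
Variable ps : seq nat.
Hypotheses (hps : (0 < size ps)%N) (hpr : all prime ps).
Local Notation M := (Mof ps).
Local Notation A := (Alg ps).

Lemma M1 : (1 < M)%N.
Proof.
case: ps hps hpr => // p s _ /andP[pp ps'].
rewrite /Mof big_cons; have p1 := prime_gt1 pp.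
have : (0 < \prod_(q <- s) q)%N.
  elim: s ps' => [|q s IH] /=; first by rewrite big_nil.
  by move=> /andP[pq h]; rewrite big_cons muln_gt0 prime_gt0 //= IH.
move=> h; apply: leq_trans p1 _; rewrite leq_pmulr //.
Qed.

Lemma dvdM p : p \in ps -> (p %| M)%N.
Proof. by move=> hp; rewrite /Mof (big_rem p) //= dvdn_mulr. Qed.

Definition isSrc (nd : cnode A) := if nd is CGate _ _ then false else true.
Definition srcv (x : seq (carrier A)) (nd : cnode A) : carrier A :=
  match nd with CIn i => nth (Z0 ps) x i | CConst a => a | CGate _ _ => Z0 ps end.

Lemma vals_src x c : all isSrc c -> vals x c = map (srcv x) c.
Proof.
elim/last_ind: c => [|c nd IH] //; rewrite all_rcons => /andP[h1 h2].
by rewrite vals_rcons IH // map_rcons; case: nd h1.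
Qed.


Definition c0 n : seq (cnode A) :=
  [seq CIn A i | i <- iota 0 n] ++ [:: CConst (Z0 ps); CConst (O1 ps)].

Lemma size_c0 n : size (c0 n) = n.+2.
Proof. by rewrite size_cat size_map size_iota addn2. Qed.

Lemma nth_c0 n k : nth (CIn A 0) (c0 n) k =
  if (k < n)%N then CIn A k else if k == n then CConst (Z0 ps) else
  if k == n.+1 then CConst (O1 ps) else CIn A 0.
Proof.
rewrite nth_cat size_map size_iota; case: ltnP => hk.
  by rewrite (nth_map 0%N) ?size_iota // nth_iota.
have [->|ne] := eqVneq k n; first by rewrite subnn.
have nk : (n < k)%N by rewrite ltn_neqAle eq_sym ne hk.
have [->|ne2] := eqVneq k n.+1; first by rewrite subSn // subnn.
rewrite nth_default //=; move: nk ne2 => /= nk /eqP ne2; lia.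
Qed.

Lemma c0_src n : all isSrc (c0 n).
Proof. by rewrite all_cat all_map; apply/andP; split=> //; apply/allP. Qed.

Lemma ev_c0 x n k : (k < n.+2)%N -> ev x (c0 n) k = srcv x (nth (CIn A 0) (c0 n) k).
Proof. by move=> hk; rewrite /ev vals_src ?c0_src // (nth_map (CIn A 0)) // size_c0. Qed.

Lemma okc_c0 n : okc n (c0 n).
Proof.
move=> k; rewrite size_c0 nth_c0 => hk; case: ltnP => [h|h] //.
case: eqP => // /eqP e1; case: eqP => // /eqP e2; move: hk h e1 e2; lia.
Qed.

Lemma CInv_c0 x n : CInv x (c0 n) n n.+1.
Proof.
split; rewrite ?size_c0 //.
- by move=> i; rewrite ev_c0 // nth_c0 ltnn eqxx /= ffunE.
- by move=> i; rewrite ev_c0 // nth_c0 ltnNge leqnSn /= eqxx (gtn_eqF (ltnSn n)) ffunE.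
Qed.

Definition T1 : {set 'Z_M} := [set 1].

Lemma bit_eq (bb : bool) : ((bb%:R : 'Z_M) == 1) = bb.
Proof. by case: bb => //=; rewrite eq_sym oner_eq0. Qed.

Lemma injF : inj ps false = Z0 ps.
Proof. by apply/ffunP => i; rewrite !ffunE. Qed.

Lemma LInv_c0 (b : seq bool) :
  LInv (map (inj ps) b) (c0 (size b)) (iota 0 (size b)) (nseq (size b) T1) (size ps).+1 b.
Proof.
move=> k hk; rewrite nth_iota // add0n size_c0; split; first by apply: (leq_trans hk); rewrite leqW.
rewrite ev_c0; last by apply: (leq_trans hk); rewrite leqW.
rewrite nth_c0 hk /= -injF (nth_map false) // nth_nseq hk ffunE inE; exact: bit_eq.
Qed.

Definition tc n (layers : seq (seq babp)) : seq (cnode A) :=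
  let r := foldr (cstep n n.+1) (c0 n, iota 0 n, nseq n T1) (zip ps layers) in
  rcons r.1.1 (CGate (gM (nth set0 r.2 0)) [:: n.+1; nth 0%N r.1.2 0]).

Definition lw n (layers : seq (seq babp)) := forall i, (i < size layers)%N ->
  all (fun g => babp_wf g (if (i.+1 < size layers)%N then size (nth [::] layers i.+1) else n))
      (nth [::] layers i).

Lemma size_evalF b ps' Ls : size ps' = size Ls ->
  size (evalF b (zip ps' Ls)) = if Ls is L :: _ then size L else size b.
Proof. by case: ps' Ls => [|p ps'] [|L Ls] //= _; rewrite size_map. Qed.

Lemma plwf_of b ps' Ls : size ps' = size Ls -> {subset ps' <= ps} -> lw (size b) Ls ->
  plwf ps b (zip ps' Ls).
Proof.
elim: ps' Ls => [|p ps' IH] [|L Ls] //= [sz] sub Hl; split.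
- by apply: (allP hpr); apply: sub; rewrite mem_head.
- by apply: dvdM; apply: sub; rewrite mem_head.
- have := Hl 0%N isT; rewrite /= size_evalF //.
  by case: Ls {IH Hl} sz.
- apply: IH => //; first by move=> q hq; apply: sub; rewrite inE hq orbT.
  by move=> i hi; have := Hl i.+1 hi.
Qed.

Lemma tc_spec n layers b : layered_wf ps n layers -> size b = n ->
  let c := tc n layers in
  [/\ okc n c, (size c <= n + 3 + plcost (zip ps layers))%N &
   ((ev (map (inj ps) b) c (size c).-1 (inord 0) == 1) = layered_eval ps layers b)].
Proof.
move=> [sz [h1 Hl]] hb; subst n.
have sL : size (zip ps layers) = size ps by rewrite size_zip sz minnn.
have Hpl : plwf ps b (zip ps layers) by apply: plwf_of => //; exact: Hl.
have := @cfold_spec ps (map (inj ps) b) (size b) (size b) (size b).+1 b (zip ps layers)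
  (c0 (size b)) (iota 0 (size b)) (nseq (size b) T1) M1 _ Hpl (@LInv_c0 b) (@CInv_c0 _ _) (@okc_c0 _).
rewrite sL leqnn => /(_ isT) [[t ext] ok HL szb].
rewrite /tc; set r := foldr _ _ _ in ext ok HL szb *.
rewrite subSnn in HL.
have hev : (0 < size (evalF b (zip ps layers)))%N.
  rewrite size_evalF //; case: layers sz h1 {Hl Hpl sL ext ok HL szb r} => [|L Ls] /=.
    by move=> e; move: hps; rewrite -e.
  by move=> _ ->.
have [hr hbit] := HL 0%N hev.
have CI : CInv (map (inj ps) b) r.1.1 (size b) (size b).+1 by rewrite ext; apply: CInv_cat; apply: CInv_c0.
case: CI => _ o1 _ o2.
split.
- by apply: okc_rcons => //=; rewrite o1 hr.
- rewrite size_rcons; apply: leq_ltn_trans szb _; rewrite size_c0.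
  by rewrite ltn_add2r addn3.
- rewrite (_ : forall s nd, (size (rcons s nd)).-1 = size s); last by move=> s nd; rewrite size_rcons.
  rewrite ev_mulbit mulbitE // o2 mul1r bit_eq.
  exact: hbit.
Qed.

Lemma csize_le n (c : seq (cnode A)) : okc n c -> (circuit_size c <= 4 * size c)%N.
Proof.
move=> ok; rewrite /circuit_size (big_nth (CIn A 0)) big_seq.
apply: (@leq_trans (size c + \sum_(i <- index_iota 0 (size c) | i \in index_iota 0 (size c)) 3)).
  rewrite leq_add2l; apply: leq_sum => i; rewrite mem_index_iota => /andP[_ hi].
  have := ok i hi; case: (nth (CIn A 0) c i) => //= s ch /andP[/eqP -> _].
  by case: s => [[]|].
by rewrite -big_seq sum_nat_const_nat subn0 mulnC -mulSn.
Qed.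

Lemma gcost_le g : (gcost g <= 2 * (babp_size g + size (g_wires g)) ^ 2)%N.
Proof.
rewrite /gcost /babp_size mulnCA leq_mul2l /= expnS expn1.
by apply: leq_mul; lia.
Qed.

Lemma plcost_le layers : size layers = size ps ->
  (plcost (zip ps layers) <= 2 * (layered_size layers) ^ 2)%N.
Proof.
move=> sz; rewrite /plcost /layered_size.
rewrite -[X in (_ <= 2 * (\sum_(L <- X) _) ^ 2)%N](@unzip2_zip _ _ ps layers) ?sz //.
rewrite big_map.
set a := fun g => (babp_size g + size (g_wires g))%N.
apply: (@leq_trans (\sum_(pL <- zip ps layers) 2 * (\sum_(g <- pL.2) a g) ^ 2)).
  apply: leq_sum => pL _.
  apply: (@leq_trans (\sum_(g <- pL.2) 2 * a g ^ 2)); first by apply: leq_sum => g _; apply: gcost_le.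
  by rewrite -big_distrr leq_mul2l /= sum_sq.
by rewrite -big_distrr leq_mul2l /= (sum_sq _ (fun pL => \sum_(g <- pL.2) a g)).
Qed.

Lemma poly_bound n e LS N : (0 < n)%N -> (LS <= e * n ^ e + e)%N ->
  (N <= 4 * (n + 3 + 2 * LS ^ 2))%N ->
  (N <= (32 * e ^ 2 + 2 * e + 16) * n ^ (32 * e ^ 2 + 2 * e + 16) + (32 * e ^ 2 + 2 * e + 16))%N.
Proof.
move=> n0 hLS hN.
set E' := (32 * e ^ 2 + 2 * e + 16)%N.
have P1 : (1 <= n ^ e)%N by rewrite expn_gt0 n0.
have L1 : (LS <= 2 * e * n ^ e)%N by apply: leq_trans hLS _; nia.
have Q : (n ^ e * n ^ e <= n ^ E')%N.
  by rewrite -expnD leq_pexp2l // /E'; nia.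
have R : (n <= n ^ E')%N by rewrite -{1}(expn1 n) leq_pexp2l // /E'; lia.
have L2 : (LS ^ 2 <= 4 * e ^ 2 * n ^ E')%N.
  apply: (@leq_trans ((2 * e * n ^ e) ^ 2)); first by rewrite leq_exp2r.
  rewrite expnMn expnMn; apply: leq_mul => //.
have L3 : (N <= 4 * n + 12 + 32 * e ^ 2 * n ^ E')%N.
  apply: leq_trans hN _; nia.
apply: leq_trans L3 _.
have : (32 * e ^ 2 * n ^ E' + 4 * n ^ E' <= E' * n ^ E')%N.
  rewrite -mulnDl leq_mul2r /E'; apply/orP; right; lia.
nia.
Qed.

Lemma main_nuP L : in_nuDet ps L -> in_nuP A L.
Proof.
move=> [C [e HC]].
exists (fun n => tc n (C n)), (inj ps), [set v : carrier A | v (inord 0) == 1],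
  (32 * e ^ 2 + 2 * e + 16)%N.
split.
- move=> n n0; have [hw [hs _]] := HC n.
  have [ok sz _] := @tc_spec n (C n) (nseq n false) hw (size_nseq _ _).
  split.
    split; last exact: ok.
    by rewrite /tc size_rcons.
  apply: (poly_bound n0 hs); apply: leq_trans (csize_le ok) _.
  rewrite leq_mul2l /=; apply: leq_trans sz _.
  rewrite leq_add2l; apply: plcost_le.
  by case: hw.
- move=> b b0; have [hw [_ hL]] := HC (size b).
  have [_ _ ev1] := @tc_spec (size b) (C (size b)) b hw erefl.
  rewrite hL // -ev1 inE /circuit_eval injF.
  have evl : forall c, ev [seq inj ps i | i <- b] c (size c).-1 =
      last (Z0 ps) (vals [seq inj ps i | i <- b] c).
    by move=> c; rewrite /ev -(size_vals [seq inj ps i | i <- b]) nth_last.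
  by rewrite evl.
Qed.

End Final.

Close Scope ring_scope.

Theorem mainTheorem10 (ps : seq nat) :
  0 < size ps -> all prime ps ->
  exists A : finAlgebra,
    solvable_alg A /\ has_malcev A /\
    forall L : seq bool -> bool, in_nuDet ps L -> in_nuP A L.
Proof.
move=> h1 h2; exists (Alg ps); split; first exact: Alg_solvable.
split; first exact: Alg_malcev.
exact: main_nuP.
Qed.
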